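(* Let $d\geq 3$ and $n_1\geq\cdots\geq n_d\geq 2$ be integers, let $N=\prod_{i=1}^{d-1}n_i$, and let $\tilde f$ be a $Q_{d-1}$-magic vertex labeling of $\textsc{Grid}(n_1,\ldots,n_{d-1})$ with $Q_{d-1}$-magic sum $S$. Define $f:[n_1]\times\cdots\times[n_d]\to\{1,\ldots,\prod_{i=1}^d n_i\}$ by $$f(x_1,\ldots,x_d)=\begin{cases}\tilde f(x_1,\ldots,x_{d-1})+(x_d-1)N & \text{if } x_1+\cdots+x_{d-1}\text{ is even},\\ \tilde f(x_1,\ldots,x_{d-1})+(n_d-x_d)N & \text{if } x_1+\cdots+x_{d-1}\text{ is odd}.\end{cases}$$ Then $f$ is a $Q_d$-magic vertex labeling of $\textsc{Grid}(n_1,\ldots,n_d)$ with $Q_d$-magic sum $2S+2^{d-1}(n_d-1)N$.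
   Context: $[k]=\{1,\ldots,k\}$. The grid graph $\textsc{Grid}(n_1,\ldots,n_m)$ has vertex set $[n_1]\times\cdots\times[n_m]$ and edge set $\{\{\mathbf x,\mathbf y\}:\sum_{i=1}^m|x_i-y_i|=1\}$. The $m$-cube $Q_m$ is $\textsc{Grid}(2,\ldots,2)$ ($m$ entries). A bijection $f:V\to\{1,\ldots,|V|\}$ on the vertex set of a graph $G=(V,E)$ is an $H$-magic vertex labeling if there is a constant $c$ (the $H$-magic sum) with $\sum_{v\in V(H')}f(v)=c$ for every subgraph $H'\subseteq G$ isomorphic to $H$. *)

(* Defs.v *)
From mathcomp Require Import all_boot.
Set Implicit Arguments. Unset Strict Implicit. Unset Printing Implicit Defensive.

(* Vertices of Grid(n_1,...,n_m), with the sizes given by n : nat -> nat,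
   0-indexed: coordinate i (i < m) ranges over [n i].  A vertex stores
   0-based coordinates: x i : 'I_(n i) represents the value (x i).+1 in [n i]. *)
Definition gridV (m : nat) (n : nat -> nat) : finType :=
  {dffun forall i : 'I_m, 'I_(n i)}.

(* Edge relation: sum_i |x_i - y_i| = 1 (shift by 1 does not affect distances). *)
Definition grid_adj (m : nat) (n : nat -> nat) : rel (gridV m n) :=
  fun x y => \sum_(i < m) ((x i - y i) + (y i - x i)) == 1.

Definition cubeV (m : nat) : finType := gridV m (fun _ => 2).
Definition cube_adj (m : nat) : rel (cubeV m) := grid_adj (n:=fun _ => 2).

(* A subgraph H' of G isomorphic to H is the same as (the image of) an
   injective adjacency-preserving map phi : V(H) -> V(G); V(H') = image phi. *)
Definition subgraph_copy (VH VG : finType) (adjH : rel VH) (adjG : rel VG)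
  (phi : VH -> VG) : Prop :=
  injective phi /\ forall u v, adjH u v -> adjG (phi u) (phi v).

Definition magic_labeling (VH VG : finType) (adjH : rel VH) (adjG : rel VG)
  (f : VG -> nat) (c : nat) : Prop :=
  [/\ injective f,
      (forall v, 1 <= f v <= #|VG|),
      (forall k, 1 <= k <= #|VG| -> exists v, f v = k) &
      (forall phi : VH -> VG, subgraph_copy adjH adjG phi ->
         \sum_(u : VH) f (phi u) = c)].

Definition grid_restr (d : nat) (n : nat -> nat) (x : gridV d n) : gridV d.-1 n :=
  [ffun i : 'I_d.-1 => x (widen_ord (leq_pred d) i)].

Definition grid_coord (m : nat) (n : nat -> nat) (x : gridV m n) (k : nat) : nat :=
  nth 0 [seq nat_of_ord (x i) | i <- enum 'I_m] k.

Definition lift_label (d : nat) (n : nat -> nat) (ft : gridV d.-1 n -> nat)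
  (x : gridV d n) : nat :=
  let N := \prod_(i < d.-1) n i in
  let x' := grid_restr x in
  let xd := (grid_coord x d.-1).+1 in
  if ~~ odd (\sum_(i < d.-1) (nat_of_ord (x' i)).+1)
  then ft x' + (xd - 1) * N
  else ft x' + (n d.-1 - xd) * N.

(* Main.v *)
Set Warnings "-notation-overridden,-ambiguous-paths".
Require Import Defs.
From mathcomp Require Import all_boot all_algebra zify ring.
Import GRing.Theory Num.Theory.
Set Implicit Arguments. Unset Strict Implicit. Unset Printing Implicit Defensive.

Section Unit.
Local Open Scope ring_scope.
Variable m : nat.
Implicit Types a b : 'I_m -> int.

Definition L1 a := \sum_(i < m) `|a i|.
Definition ip a b := \sum_(i < m) a i * b i.

Lemma sum_ge_term (F : 'I_m -> int) k : (forall i, 0 <= F i) -> F k <= \sum_i F i.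
Proof.
move=> H; rewrite (bigD1 k) //= lerDl; exact: sumr_ge0.
Qed.

Lemma unit_le1 a i : L1 a = 1 -> `|a i| <= 1.
Proof. move=> H; rewrite -H; apply: sum_ge_term => j; exact: normr_ge0. Qed.

Lemma sq1 a : L1 a = 1 -> ip a a = 1.
Proof.
move=> H; rewrite -[RHS]H /ip /L1; apply: eq_bigr => i _.
have := unit_le1 i H; nia.
Qed.

Lemma sq_expand a b (s : int) :
  \sum_(i < m) (a i + s * b i) * (a i + s * b i) = ip a a + s * s * ip b b + 2 * s * ip a b.
Proof.
rewrite /ip !mulr_sumr -!big_split /=; apply: eq_bigr => i _; ring.
Qed.

Lemma ip_le a b k : L1 a = 1 -> L1 b = 1 -> a k != b k -> ip a b <= 0.
Proof.
move=> Ha Hb Hk.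
have E := sq_expand a b (-1).
rewrite (sq1 Ha) (sq1 Hb) in E.
have : (a k + -1 * b k) * (a k + -1 * b k) <= \sum_(i < m) (a i + -1 * b i) * (a i + -1 * b i).
  apply: sum_ge_term => i; by rewrite -expr2 sqr_ge0.
have : a k != b k by [].
move/eqP => Hne.
have : 1 <= (a k + -1 * b k) * (a k + -1 * b k) by nia.
move=> h1 h2; rewrite E in h2. lia.
Qed.

Lemma ip_ge a b k : L1 a = 1 -> L1 b = 1 -> a k + b k != 0 -> 0 <= ip a b.
Proof.
move=> Ha Hb /eqP Hk.
have E := sq_expand a b 1.
rewrite (sq1 Ha) (sq1 Hb) in E.
have : (a k + 1 * b k) * (a k + 1 * b k) <= \sum_(i < m) (a i + 1 * b i) * (a i + 1 * b i).
  apply: sum_ge_term => i; by rewrite -expr2 sqr_ge0.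
have : 1 <= (a k + 1 * b k) * (a k + 1 * b k) by nia.
lia.
Qed.

Lemma square (x0 x1 x2 x3 : 'I_m -> int) k1 k2 :
  L1 (fun i => x1 i - x0 i) = 1 -> L1 (fun i => x2 i - x0 i) = 1 ->
  L1 (fun i => x3 i - x1 i) = 1 -> L1 (fun i => x3 i - x2 i) = 1 ->
  x0 k1 != x3 k1 -> x1 k2 != x2 k2 ->
  forall i, x3 i = x1 i + x2 i - x0 i.
Proof.
move=> Ha Hb Hc Hd H1 H2 i.
set al := fun i => x1 i - x0 i.
have E : ip al (fun i => x3 i - x1 i) =
   ip al (fun i => x2 i - x0 i) + ip al (fun i => x3 i - x2 i) - ip al al.
  rewrite /ip -big_split /= -sumrB; apply: eq_bigr => j _; rewrite /al; ring.
rewrite (sq1 Ha) in E.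
have G : 0 <= ip al (fun i => x3 i - x1 i).
  apply: (ip_ge (k:=k1)) => //; rewrite /al.
  apply/eqP => h; move/eqP: H1; apply; lia.
have L1' : ip al (fun i => x2 i - x0 i) <= 0.
  apply: (ip_le (k:=k2)) => //; rewrite /al.
  apply/eqP => h; move/eqP: H2; apply; lia.
case: (boolP (al i == x3 i - x2 i)) => [/eqP|Hn]; first by rewrite /al; lia.
have := ip_le Ha Hd Hn; rewrite -/al; lia.
Qed.
End Unit.

Section G2.
Local Open Scope ring_scope.
Definition Pz m (n : nat -> nat) (x : gridV m n) (i : 'I_m) : int := (x i : nat)%:Z.

Lemma adjL1 m (n : nat -> nat) (x y : gridV m n) :
  grid_adj x y -> L1 (fun i => Pz y i - Pz x i) = 1%R.
Proof.
rewrite /grid_adj /L1 => /eqP H.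
have -> : 1%R = (1%N)%:Z by [].
rewrite -H (big_morph Posz PoszD (erefl _)); apply: eq_bigr => i _.
rewrite /Pz; case: (leqP (x i) (y i)) => h; lia.
Qed.

Lemma L1sym m (a b : 'I_m -> int) : L1 (fun i => a i - b i) = L1 (fun i => b i - a i).
Proof. by apply: eq_bigr => i _; rewrite distrC. Qed.

Definition one2 : 'I_2 := @Ordinal 2 1 isT.
Definition cset m (u : cubeV m) (k : 'I_m) (b : 'I_2) : cubeV m :=
  [ffun i => if i == k then b else u i].
Definition c0 m : cubeV m := [ffun i => ord0].

Lemma csetE m (u : cubeV m) k b i : cset u k b i = if i == k then b else u i.
Proof. by rewrite ffunE. Qed.

Lemma cube_adj_cset m (u : cubeV m) k b : u k != b -> cube_adj u (cset u k b).
Proof.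
move=> H; rewrite /cube_adj /grid_adj (bigD1 k) //= big1 ?addn0.
  rewrite csetE eqxx; move: H; case: (u k) => [[|[|?]] ?]; case: b => [[|[|?]] ?] //.
move=> i /negbTE hi; by rewrite csetE hi subnn.
Qed.

Lemma ord2 (b : 'I_2) : (b : nat) = 0%N \/ (b : nat) = 1%N.
Proof. case: b => [[|[|?]] ?] //=; by [left|right]. Qed.

End G2.
Section Geo.
Local Open Scope ring_scope.
Variables (m : nat) (n : nat -> nat) (phi : cubeV m -> gridV m n).
Hypothesis Hphi : subgraph_copy (@cube_adj m) (@grid_adj m n) phi.

Definition Q u i := Pz (phi u) i.
Definition Uz (u : cubeV m) i : int := (u i : nat)%:Z.

Lemma Q_inj u v : (forall i, Q u i = Q v i) -> u = v.
Proof.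
move=> H; apply: (proj1 Hphi); apply/ffunP => i; apply: val_inj.
by have := H i; rewrite /Q /Pz; case.
Qed.

Lemma Q_neq u v : u != v -> exists k, Q u k != Q v k.
Proof.
move=> /eqP H; case: (boolP [exists k, Q u k != Q v k]) => [/existsP //|/existsPn Hn].
by exfalso; apply: H; apply: Q_inj => i; apply/eqP; have := Hn i; rewrite negbK.
Qed.

Lemma QL1 u v : cube_adj u v -> L1 (fun i => Q v i - Q u i) = 1.
Proof. move=> H; exact: adjL1 ((proj2 Hphi) _ _ H). Qed.

Definition wt (u : cubeV m) : nat := (\sum_i (u i : nat))%N.
Definition w k i := Q (cset (c0 m) k one2) i - Q (c0 m) i.

Lemma wt_cset (u : cubeV m) k : (u k : nat) = 1%N -> (wt (cset u k ord0) < wt u)%N.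
Proof.
move=> H; rewrite /wt (bigD1 k) //= [X in (_ < X)%N](bigD1 k) //= csetE eqxx H.
rewrite add0n add1n ltnS leq_eqVlt; apply/orP; left; apply/eqP; apply: eq_bigr => i /negbTE hi.
by rewrite csetE hi.
Qed.

Lemma formula (u : cubeV m) i : Q u i = Q (c0 m) i + \sum_k Uz u k * w k i.
Proof.
move: {2}(wt u) (leqnn (wt u)) => N; elim: N u i => [|N IH] u i Hw.
- have -> : u = c0 m.
    apply/ffunP => k; apply: val_inj; rewrite ffunE /=.
    have : (wt u <= 0)%N by []. rewrite leqn0 /wt sum_nat_eq0 => /forallP /(_ k).
    by move/eqP.
  rewrite big1 ?addr0 // => k _; by rewrite /Uz ffunE mul0r.
- case: (boolP [exists k, (u k : nat) == 1%N]); last first.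
    move=> /existsPn Hn; apply: IH => //.
    have -> : wt u = 0%N; last by [].
    apply/eqP; rewrite /wt sum_nat_eq0; apply/forallP => k.
    by have := Hn k; case: (ord2 (u k)) => ->.
  move=> /existsP [k /eqP Hk].
  set u1 := cset u k ord0.
  have Hw1 : (wt u1 <= N)%N by have := wt_cset Hk; rewrite -/u1; lia.
  case: (boolP [exists l, (u1 l : nat) == 1%N]); last first.
    move=> /existsPn Hn.
    have Eu : u = cset (c0 m) k one2.
      apply/ffunP => j; apply: val_inj; rewrite !ffunE.
      case: (eqVneq j k) => [->|hj] //=.
      have := Hn j; rewrite /u1 csetE (negbTE hj); by case: (ord2 (u j)) => ->.
    rewrite (bigD1 k) //= big1 ?addr0.
      by rewrite /Uz Eu csetE eqxx /w /=; ring.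
    by move=> j hj; rewrite /Uz Eu csetE (negbTE hj) ffunE mul0r.
  move=> /existsP [l /eqP Hl].
  have hlk : l != k by apply/eqP => e; move: Hl; rewrite e /u1 csetE eqxx.
  have Hul : (u l : nat) = 1%N by move: Hl; rewrite /u1 csetE (negbTE hlk).
  set u2 := cset u l ord0.
  set u' := cset u1 l ord0.
  have Hw2 : (wt u2 <= N)%N by have := wt_cset Hul; rewrite -/u2; lia.
  have Hw' : (wt u' <= N)%N by have := wt_cset Hl; rewrite -/u'; lia.
  have Eu' : u' = cset u2 k ord0.
    apply/ffunP => j; rewrite /u' /u2 /u1 !csetE.
    by case: (j == l); case: (j == k).
  have Hk2 : (u2 k : nat) = 1%N by rewrite csetE eq_sym (negbTE hlk).
  have ne1 : forall (b : 'I_2), (b : nat) = 1%N -> b != ord0.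
    by move=> b hb; apply/eqP => e; move: hb; rewrite e.
  have A1 := QL1 (cube_adj_cset (ne1 _ Hl)).
  have A2 : L1 (fun j => Q u' j - Q u2 j) = 1.
    by rewrite Eu'; apply: QL1; apply: cube_adj_cset; apply: ne1.
  have A3 := QL1 (cube_adj_cset (ne1 _ Hk)).
  have A4 := QL1 (cube_adj_cset (ne1 _ Hul)).
  rewrite -/u1 -/u' in A1; rewrite -/u1 in A3; rewrite -/u2 in A4.
  have hkl : (k == l) = false by rewrite eq_sym (negbTE hlk).
  have [k1 Hk1] : exists k1, Q u' k1 != Q u k1.
    apply: Q_neq; apply/eqP => e; have := congr1 (fun x : cubeV m => (x k : nat)) e.
    by rewrite /= /u' /u1 !csetE hkl eqxx Hk.
  have [k2 Hk2'] : exists k2, Q u1 k2 != Q u2 k2.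
    apply: Q_neq; apply/eqP => e; have := congr1 (fun x : cubeV m => (x k : nat)) e.
    by rewrite /= /u2 /u1 !csetE hkl eqxx Hk.
  have Sq := square (x0 := Q u') (x1 := Q u1) (x2 := Q u2) (x3 := Q u)
     (k1 := k1) (k2 := k2).
  rewrite Sq //; try by rewrite L1sym.
  rewrite (IH u1) // (IH u2) // (IH u') //.
  have : \sum_k0 Uz u k0 * w k0 i =
    \sum_k0 Uz u1 k0 * w k0 i + \sum_k0 Uz u2 k0 * w k0 i - \sum_k0 Uz u' k0 * w k0 i.
    rewrite -big_split -sumrB /=; apply: eq_bigr => j _.
    rewrite /Uz /u' /u1 /u2 !csetE.
    case: (eqVneq j l) => [->|hjl]; first by rewrite ?eqxx (negbTE hlk) /= Hul; ring.
    case: (eqVneq j k) => [->|hjk]; first by rewrite ?eqxx ?hkl /= Hk; ring.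
    by rewrite /=; ring.
  move=> ->; ring.
Qed.


Lemma w_unit k : L1 (w k) = 1.
Proof. have h : (c0 m) k != one2 by rewrite ffunE. exact: QL1 (cube_adj_cset h). Qed.

Lemma w_support k i j : w k i != 0 -> j != i -> w k j = 0.
Proof.
move=> /eqP hi hj; have := w_unit k; rewrite /L1 (bigD1 i) //= (bigD1 j) //=.
set s := (\sum_(_ < _ | _) _); have : 0 <= s by apply: sumr_ge0.
lia.
Qed.

Lemma Q_ext u v : (forall j, Q u j = Q v j) -> u = v.
Proof. exact: Q_inj. Qed.

Lemma sum2 (u : cubeV m) k l j : k != l -> (forall t, t != k -> t != l -> u t = ord0) ->
  \sum_t Uz u t * w t j = Uz u k * w k j + Uz u l * w l j.
Proof.
move=> hkl H; rewrite (bigD1 k) //= (bigD1 l) 1?eq_sym //= big1 ?addr0 //.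
move=> t /andP [h1 h2]; by rewrite /Uz H // mul0r.
Qed.

Lemma distinct k l i : k != l -> w k i != 0 -> w l i = 0.
Proof.
move=> hkl hk; apply/eqP; apply/negP => /negP hl.
have Sk := w_support hk; have Sl := w_support hl.
have Bk := unit_le1 i (w_unit k); have Bl := unit_le1 i (w_unit l).
have hlk : l != k by rewrite eq_sym.
have [E|E] : w k i = w l i \/ w k i = - w l i.
  move: hk hl => /eqP hk /eqP hl; lia.
- have : cset (c0 m) k one2 = cset (c0 m) l one2.
    apply: Q_ext => j; case: (eqVneq j i) => [->|hj].
      by move: E; rewrite /w; lia.
    by have := Sk j hj; have := Sl j hj; rewrite /w; lia.
  move/(congr1 (fun x : cubeV m => (x k : nat))); by rewrite !csetE eqxx (negbTE hkl) ffunE.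
- set u := cset (cset (c0 m) k one2) l one2.
  have : u = c0 m.
    apply: Q_ext => j; rewrite (formula u) (sum2 (k := k) (l := l)) //; last first.
      by move=> t h1 h2; rewrite /u !csetE (negbTE h1) (negbTE h2) ffunE.
    rewrite /Uz /u !csetE eqxx (negbTE hkl) eqxx /=.
    case: (eqVneq j i) => [->|hj]; first by lia.
    by rewrite (Sk j hj) (Sl j hj); lia.
  move/(congr1 (fun x : cubeV m => (x k : nat))); by rewrite /u !csetE eqxx (negbTE hkl) ffunE.
Qed.

Lemma Uz_bound (u : cubeV m) t : 0 <= Uz u t <= 1.
Proof. rewrite /Uz; case: (ord2 (u t)) => ->; by []. Qed.

Lemma bound u v i : Q u i - Q v i <= 1.
Proof.
have -> : Q u i - Q v i = \sum_t (Uz u t - Uz v t) * w t i.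
  rewrite (formula u) (formula v).
  have -> : \sum_t (Uz u t - Uz v t) * w t i = \sum_t Uz u t * w t i - \sum_t Uz v t * w t i.
    by rewrite -sumrB; apply: eq_bigr => t _; ring.
  ring.
case: (boolP [exists t, w t i != 0]) => [/existsP [t0 ht0]|/existsPn Hn].
  rewrite (bigD1 t0) //= big1 ?addr0.
    have := unit_le1 i (w_unit t0); have := Uz_bound u t0; have := Uz_bound v t0; nia.
  by move=> t ht; rewrite (distinct _ ht0) ?mulr0 // eq_sym.
by rewrite big1 // => t _; have := Hn t; rewrite negbK => /eqP ->; rewrite mulr0.
Qed.

Lemma box : exists a : 'I_m -> nat, forall u i, (a i <= phi u i <= a i + 1)%N.
Proof.
exists (fun i => if [exists u, (phi u i < phi (c0 m) i)%N] then (phi (c0 m) i).-1 else phi (c0 m) i).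
move=> u i.
have B : forall x y, Pz (phi x) i - Pz (phi y) i <= 1 by move=> x y; exact: bound.
case: (boolP [exists u, (phi u i < phi (c0 m) i)%N]) => [/existsP [v hv]|/existsPn Hn].
  have := B u v; have := B (c0 m) v; have := B v u; have := B u (c0 m); have := B (c0 m) u.
  rewrite /Pz; lia.
have := Hn u; have := B u (c0 m); rewrite /Pz; lia.
Qed.

End Geo.

Lemma card_grid m (n : nat -> nat) : #|gridV m n| = \prod_(i < m) n i.
Proof.
rewrite /gridV card_dep_ffun foldrE big_image /=.
by apply: eq_bigr => i _; rewrite card_ord.
Qed.

Lemma gc m (n : nat -> nat) (x : gridV m.+1 n) : grid_coord x m = x ord_max.
Proof.
rewrite /grid_coord (nth_map ord0) ?size_enum_ord //.
have -> : nth ord0 (enum 'I_m.+1) m = ord_max by apply: val_inj; rewrite /= nth_enum_ord.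
by [].
Qed.

Lemma surj_of_inj (T : finType) (f : T -> nat) : injective f ->
  (forall v, 1 <= f v <= #|T|) -> forall k, 1 <= k <= #|T| -> exists v, f v = k.
Proof.
move=> Hi Hr k Hk.
have [_ E] : (size [seq f x | x <- enum T] = size (iota 1 #|T|)) * ([seq f x | x <- enum T] =i iota 1 #|T|).
  apply: uniq_min_size.
  - by rewrite map_inj_uniq ?enum_uniq.
  - move=> y /mapP [x _ ->]; rewrite mem_iota; have := Hr x; lia.
  - by rewrite size_map size_iota -cardE.
have : k \in iota 1 #|T| by rewrite mem_iota; lia.
rewrite -E => /mapP [x _ ->]; by exists x.
Qed.

Lemma divmod_uniq (a1 a2 t1 t2 N : nat) : 1 <= a1 <= N -> 1 <= a2 <= N ->
  a1 + t1 * N = a2 + t2 * N -> a1 = a2 /\ t1 = t2.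
Proof.
move=> h1 h2 E.
case: (ltngtP t1 t2) => h.
- have : t1.+1 * N <= t2 * N by rewrite leq_mul2r h orbT.
  rewrite mulSn; lia.
- have : t2.+1 * N <= t1 * N by rewrite leq_mul2r h orbT.
  rewrite mulSn; lia.
- subst; lia.
Qed.

Definition ext m (c : cubeV m.+1) (t : 'I_2) : cubeV m.+2 :=
  [ffun i : 'I_m.+2 => if (i < m.+1)%N then c (inord i) else t].
Definition restrc m (b : cubeV m.+2) : cubeV m.+1 := grid_restr b.

Lemma restrc_ext m c t : @restrc m (ext c t) = c.
Proof.
apply/ffunP => j; rewrite !ffunE /= ltn_ord; congr (c _).
by apply: val_inj; rewrite /= inordK.
Qed.

Lemma ext_restrc m (b : cubeV m.+2) t : b ord_max = t -> ext (restrc b) t = b.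
Proof.
move=> H; apply/ffunP => i; rewrite !ffunE.
case: ifP => hi.
  congr (b _); apply: val_inj; by rewrite /= inordK.
have -> : i = ord_max by apply: val_inj; have := ltn_ord i; rewrite /= ; lia.
by rewrite H.
Qed.

Lemma widenE m (x : gridV m.+1 (fun _ => 2)) (j : 'I_m) : grid_restr x j = x (widen_ord (leq_pred m.+1) j).
Proof. by rewrite ffunE. Qed.

Lemma half m (G : cubeV m.+1 -> nat) (t : 'I_2) :
  \sum_(b : cubeV m.+2 | b ord_max == t) G (restrc b) = \sum_c G c.
Proof.
rewrite (reindex_onto (fun c => ext c t) (@restrc m)); last by move=> b /eqP; exact: ext_restrc.
apply: eq_big => c; last by rewrite restrc_ext.
by rewrite restrc_ext eqxx ffunE /= ltnn eqxx.
Qed.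

Lemma double m (G : cubeV m.+1 -> nat) :
  \sum_(b : cubeV m.+2) G (restrc b) = 2 * \sum_c G c.
Proof.
rewrite (bigID (fun b : cubeV m.+2 => b ord_max == ord0)) /= half.
rewrite (eq_bigl (fun b : cubeV m.+2 => b ord_max == one2)); last first.
  by move=> b; case: (b ord_max) => [[|[|?]] ?].
by rewrite half mul2n addnn.
Qed.

Section Main.
Variables (m : nat) (n : nat -> nat) (ft : gridV m.+1 n -> nat) (S : nat).
Hypothesis Hft : magic_labeling (@cube_adj m.+1) (@grid_adj m.+1 n) ft S.

Let N := \prod_(i < m.+1) n i.
Let f := @lift_label m.+2 n ft.
Definition tt_ (x : gridV m.+2 n) : nat :=
  if ~~ odd (\sum_(i < m.+1) ((grid_restr x i : nat).+1)) then (x ord_max : nat)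
  else n m.+1 - (x ord_max).+1.

Lemma fE x : f x = ft (grid_restr x) + tt_ x * N.
Proof. by rewrite /f /lift_label gc /tt_ subn1 /=; case: ifP. Qed.

Lemma ft_range y : 1 <= ft y <= N.
Proof. case: Hft => _ H _ _; have := H y; by rewrite card_grid. Qed.

Lemma tt_lt x : tt_ x < n m.+1.
Proof. rewrite /tt_; have := ltn_ord (x ord_max); case: ifP => _ /=; lia. Qed.

Lemma f_inj : injective f.
Proof.
move=> x y; rewrite !fE => E.
have [E1 E2] := divmod_uniq (ft_range _) (ft_range _) E.
have Er : grid_restr x = grid_restr y by case: Hft => Hi _ _ _; exact: Hi.
have Em : (x ord_max : nat) = y ord_max.
  move: E2; rewrite /tt_ Er; have := ltn_ord (x ord_max); have := ltn_ord (y ord_max).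
  case: ifP => _ /=; lia.
apply/ffunP => i; apply: val_inj.
case: (ltnP i m.+1) => hi.
  have -> : i = widen_ord (leq_pred m.+2) (Ordinal hi) by apply: val_inj.
  by have := congr1 (fun z : gridV m.+1 n => (z (Ordinal hi) : nat)) Er; rewrite !ffunE.
have -> : i = ord_max by apply: val_inj; have := ltn_ord i; rewrite /=; lia.
exact: Em.
Qed.

Lemma card_big : #|gridV m.+2 n| = N * n m.+1.
Proof. by rewrite !card_grid big_ord_recr. Qed.

Lemma f_range x : 1 <= f x <= #|gridV m.+2 n|.
Proof.
rewrite fE card_big; have := ft_range (grid_restr x); have := tt_lt x => h1 h2.
have : (tt_ x).+1 * N <= n m.+1 * N by rewrite leq_mul2r h1 orbT.
rewrite mulSn; lia.
Qed.


Section Magic.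
Variable phi : cubeV m.+2 -> gridV m.+2 n.
Hypothesis Hphi : subgraph_copy (@cube_adj m.+2) (@grid_adj m.+2 n) phi.
Variable a : 'I_m.+2 -> nat.
Hypothesis Ha : forall u i, a i <= phi u i <= a i + 1.

Definition beta u : cubeV m.+2 := [ffun i => inord (phi u i - a i)].

Lemma phiE u i : (phi u i : nat) = a i + beta u i.
Proof. rewrite ffunE inordK; have := Ha u i; lia. Qed.

Lemma beta_inj : injective beta.
Proof.
move=> u v E; apply: (proj1 Hphi); apply/ffunP => i; apply: val_inj.
by rewrite /= !phiE E.
Qed.

Let binv := invF beta_inj.

Lemma a_top : a ord_max + 1 < n m.+1.
Proof.
set b1 := cset (c0 m.+2) ord_max one2.
have := ltn_ord (phi (binv b1) ord_max); rewrite phiE /binv f_invF /b1 csetE eqxx /=.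
lia.
Qed.

Definition i0 : 'I_m.+2 := @Ordinal m.+2 0 isT.
Definition flip (x : 'I_2) : 'I_2 := inord (1 - x).
Definition fl (b : cubeV m.+2) := cset b i0 (flip (b i0)).

Lemma flipE x : (flip x : nat) = 1 - x.
Proof. by rewrite inordK //; lia. Qed.

Lemma fl_invol : involutive fl.
Proof.
move=> b; apply/ffunP => i; rewrite /fl !csetE; case: eqP => [->|] //.
rewrite ?eqxx; apply: val_inj; rewrite /= !flipE; by case: (b i0) => [[|[|?]] ?].
Qed.

Definition K (b : cubeV m.+2) : nat :=
  if ~~ odd (\sum_(i < m.+1) (a (widen_ord (leq_pred m.+2) i) + b (widen_ord (leq_pred m.+2) i)).+1)
  then a ord_max + b ord_max else n m.+1 - (a ord_max + b ord_max).+1.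

Lemma ttK u : tt_ (phi u) = K (beta u).
Proof.
rewrite /tt_ /K phiE.
have -> : \sum_(i < m.+1) (grid_restr (phi u) i : nat).+1 =
   \sum_(i < m.+1) (a (widen_ord (leq_pred m.+2) i) + beta u (widen_ord (leq_pred m.+2) i)).+1.
  by apply: eq_bigr => i _; rewrite ffunE; congr _.+1; exact: phiE.
by [].
Qed.

Lemma K_fl b : K b + K (fl b) = n m.+1 - 1.
Proof.
have Hmax : fl b ord_max = b ord_max by rewrite /fl csetE.
set s := fun b : cubeV m.+2 => \sum_(i < m.+1) (a (widen_ord (leq_pred m.+2) i) + b (widen_ord (leq_pred m.+2) i)).+1.
have Hs : forall b, s b = (a i0 + b i0).+1 + \sum_(i < m.+1 | i != ord0) (a (widen_ord (leq_pred m.+2) i) + b (widen_ord (leq_pred m.+2) i)).+1.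
  move=> b'; rewrite /s (bigD1 ord0) //=.
  by have -> : widen_ord (leq_pred m.+2) ord0 = i0 by apply: val_inj.
have Hrest : \sum_(i < m.+1 | i != ord0) (a (widen_ord (leq_pred m.+2) i) + fl b (widen_ord (leq_pred m.+2) i)).+1
   = \sum_(i < m.+1 | i != ord0) (a (widen_ord (leq_pred m.+2) i) + b (widen_ord (leq_pred m.+2) i)).+1.
  apply: eq_bigr => i hi; rewrite /fl csetE.
  suff -> : (widen_ord (leq_pred m.+2) i == i0) = false by [].
  apply/eqP => e; move/eqP: hi; apply; apply: val_inj; by have := congr1 val e.
have Hp : odd (s (fl b)) = ~~ odd (s b).
  rewrite !Hs Hrest /fl csetE eqxx flipE !oddD.
  by case: (ord2 (b i0)) => ->; rewrite ?addn0 ?addn1 /= ?negbK; case: (odd _); case: (odd _).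
rewrite /K -/(s b) -/(s (fl b)) Hp Hmax.
have := a_top; have := ord2 (b ord_max).
by case: (odd (s b)) => /=; lia.
Qed.

Lemma partB : \sum_u tt_ (phi u) = 2 ^ m.+1 * (n m.+1 - 1).
Proof.
have E1 : \sum_u tt_ (phi u) = \sum_b K b.
  rewrite [RHS](reindex_inj beta_inj) /=; apply: eq_bigr => u _; exact: ttK.
have E2 : \sum_b K (fl b) = \sum_b K b.
  by rewrite [RHS](reindex_inj (inv_inj fl_invol)).
have E3 : \sum_b (K b + K (fl b)) = 2 ^ m.+2 * (n m.+1 - 1).
  rewrite (eq_bigr (fun _ => n m.+1 - 1)); last by move=> b _; exact: K_fl.
  rewrite sum_nat_const card_grid.
  by rewrite (eq_bigr (fun _ => 2)) // prod_nat_const card_ord.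
move: E3; rewrite big_split /= E2 -E1 expnS -mulnA; move: (2 ^ m.+1 * _) (\sum_u _) => p q; lia.
Qed.


Definition rho (c : cubeV m.+1) : gridV m.+1 n := grid_restr (phi (binv (ext c ord0))).

Lemma rhoE c j : (rho c j : nat) = a (widen_ord (leq_pred m.+2) j) + c j.
Proof.
rewrite /rho ffunE; apply: etrans (phiE _ _) _; rewrite /binv f_invF ffunE /= ltn_ord.
congr (_ + nat_of_ord (c _)); apply: val_inj; by rewrite /= inordK.
Qed.

Lemma rho_copy : subgraph_copy (@cube_adj m.+1) (@grid_adj m.+1 n) rho.
Proof.
split.
  move=> c1 c2 E; apply/ffunP => j; apply: val_inj.
  have := congr1 (fun z : gridV m.+1 n => (z j : nat)) E; rewrite /= !rhoE; by move/addnI.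
move=> c c' H; rewrite /grid_adj.
rewrite (eq_bigr (fun j => (c j - c' j) + (c' j - c j))) //.
by move=> j _; rewrite !rhoE !subnDl.
Qed.

Lemma ft_rho u : ft (grid_restr (phi u)) = ft (rho (restrc (beta u))).
Proof.
congr ft; apply/ffunP => j; apply: val_inj; rewrite /= rhoE ffunE /restrc ffunE; exact: phiE.
Qed.

Lemma partA : \sum_u ft (grid_restr (phi u)) = 2 * S.
Proof.
have E1 : \sum_u ft (grid_restr (phi u)) = \sum_b ft (rho (restrc b)).
  rewrite [RHS](reindex_inj beta_inj) /=; apply: eq_bigr => u _; exact: ft_rho.
rewrite E1 (double (fun c => ft (rho c))).
by case: Hft => _ _ _ H; rewrite (H _ rho_copy).
Qed.
End Magic.
End Main.

Theorem lemma5 (d : nat) (n : nat -> nat) (ft : gridV d.-1 n -> nat) (S : nat) :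
  3 <= d ->
  (forall i, i.+1 < d -> n i.+1 <= n i) ->
  (forall i, i < d -> 2 <= n i) ->
  magic_labeling (@cube_adj d.-1) (@grid_adj d.-1 n) ft S ->
  magic_labeling (@cube_adj d) (@grid_adj d n) (lift_label ft)
    (2 * S + 2 ^ d.-1 * (n d.-1 - 1) * \prod_(i < d.-1) n i).
Proof.
move: ft; case: d => [|[|m]] // ft H3 _ _ Hft.
split.
- exact: f_inj Hft.
- exact: f_range Hft.
- apply: surj_of_inj; [exact: f_inj Hft | exact: f_range Hft].
- move=> phi Hphi; have [a Ha] := box Hphi.
  rewrite (eq_bigr (fun u => ft (grid_restr (phi u)) + tt_ (phi u) * \prod_(i < m.+1) n i));
    last by move=> u _; exact: fE.
  by rewrite big_split /= -big_distrl /= (partA Hft Hphi Ha) (partB Hphi Ha).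
Qed.
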